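(* Let $G$ be a non-abelian subgroup of $\mathcal{H}(n,\mathbb{C})$ with $\Lambda_G\not\subset\mathbb{R}$, $G\not\subset\mathcal{SR}_n$, and suppose $U:=\mathbb{C}^n\setminus E_G\neq\emptyset$. Then: (i) every orbit $G(z)$ with $z\in U$ is minimal in $U$, i.e. $\overline{G(w)}\cap U=\overline{G(z)}\cap U$ for every $w\in\overline{G(z)}\cap U$; (ii) if moreover $G\not\subset\mathcal{R}_n$, then $E_G$ is a minimal set of $G$ in $\mathbb{C}^n$ (a nonempty closed $G$-invariant set containing no proper nonempty closed $G$-invariant subset) and $E_G\subset\overline{G(z)}$ for every $z\in\mathbb{C}^n$; (iii) any two orbits $G(z)$, $G(y)$ with $z,y\in U$ are homeomorphic.
   Context: $\mathcal{H}(n,\mathbb{C})$ is the group of all maps $z\mapsto\lambda z+b$ of $\mathbb{C}^n$ with $\lambda\in\mathbb{C}^*$, $b\in\mathbb{C}^n$ ($\lambda$ = ratio). $\mathcal{T}_n$ = translations; $\mathcal{R}_n$ = elements whose ratio has modulus $1$. Every element of $\mathcal{H}(n,\mathbb{C})\setminus\mathcal{T}_n$ has a unique fixed point, its center. $H_2=(\frac{\pi}{2}+\pi\mathbb{Z})\cup\pi\mathbb{Z}$, $F_2=\{e^{ix}:x\in H_2\}$, $H_3=(\frac{\pi}{3}+\pi\mathbb{Z})\cup(-\frac{\pi}{3}+\pi\mathbb{Z})\cup\pi\mathbb{Z}$, $F_3=\{e^{ix}:x\in H_3\}$; $\mathcal{S}_i\mathcal{R}_n=\{z\mapsto\lambda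 z+b:\lambda\in F_i, b\in\mathbb{C}^n\}$, $\mathcal{SR}_n=\mathcal{S}_2\mathcal{R}_n\cup\mathcal{S}_3\mathcal{R}_n$. For a subgroup $G$: $G(z)$ is the orbit of $z$; $\Lambda_G$ the set of ratios of elements of $G$; $\Gamma_G$ the set of centers of elements of $G\setminus\mathcal{T}_n$; $E_G$ the smallest complex affine subspace of $\mathbb{C}^n$ containing $\Gamma_G$. Bars denote closure. *)

(* Defs.v *)
From Stdlib Require Export Reals ZArith.
From Stdlib Require Vectors.Fin.
Open Scope R_scope.

Definition C := (R * R)%type.
Definition Cre (z : C) : R := fst z.
Definition Cim (z : C) : R := snd z.
Definition C0 : C := (0, 0).
Definition C1 : C := (1, 0).
Definition Cadd (z w : C) : C := (fst z + fst w, snd z + snd w).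
Definition Copp (z : C) : C := (- fst z, - snd z).
Definition Csub (z w : C) : C := Cadd z (Copp w).
Definition Cmul (z w : C) : C :=
  (fst z * fst w - snd z * snd w, fst z * snd w + snd z * fst w).
Definition Cinv (z : C) : C :=
  let d := fst z * fst z + snd z * snd z in (fst z / d, - snd z / d).
Definition Cnorm (z : C) : R := sqrt (fst z * fst z + snd z * snd z).
Definition Cexpi (x : R) : C := (cos x, sin x).

Definition Cn (n : nat) := Fin.t n -> C.
Definition vadd {n} (u v : Cn n) : Cn n := fun i => Cadd (u i) (v i).
Definition vscal {n} (l : C) (v : Cn n) : Cn n := fun i => Cmul l (v i).
Definition vzero {n} : Cn n := fun _ => C0.

(** Elements of H(n,C): z |-> lam z + b, encoded as pairs (lam, b), lam <> 0. *)
Definition Hel (n : nat) := (C * Cn n)%type.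
Definition ratio {n} (g : Hel n) : C := fst g.
Definition happ {n} (g : Hel n) (z : Cn n) : Cn n := vadd (vscal (fst g) z) (snd g).
Definition hcomp {n} (g h : Hel n) : Hel n :=
  (Cmul (fst g) (fst h), vadd (vscal (fst g) (snd h)) (snd g)).
Definition hid {n} : Hel n := (C1, vzero).
Definition hinv {n} (g : Hel n) : Hel n :=
  (Cinv (fst g), vscal (Copp (Cinv (fst g))) (snd g)).

Definition is_subgroup {n} (G : Hel n -> Prop) : Prop :=
  (forall g, G g -> fst g <> C0) /\
  G hid /\
  (forall g h, G g -> G h -> G (hcomp g h)) /\
  (forall g, G g -> G (hinv g)).

Definition non_abelian {n} (G : Hel n -> Prop) : Prop :=
  exists g h, G g /\ G h /\ hcomp g h <> hcomp h g.

Definition Lambda {n} (G : Hel n -> Prop) (l : C) : Prop :=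
  exists g, G g /\ ratio g = l.
Definition H2 (x : R) : Prop :=
  exists k : Z, x = PI / 2 + IZR k * PI \/ x = IZR k * PI.
Definition F2 (l : C) : Prop := exists x, H2 x /\ l = Cexpi x.
Definition H3 (x : R) : Prop :=
  exists k : Z, x = PI / 3 + IZR k * PI \/ x = - (PI / 3) + IZR k * PI
                \/ x = IZR k * PI.
Definition F3 (l : C) : Prop := exists x, H3 x /\ l = Cexpi x.
Definition in_SR {n} (g : Hel n) : Prop := F2 (ratio g) \/ F3 (ratio g).
Definition in_R {n} (g : Hel n) : Prop := Cnorm (ratio g) = 1.
Definition is_translation {n} (g : Hel n) : Prop := ratio g = C1.

Definition Gamma {n} (G : Hel n -> Prop) (z : Cn n) : Prop :=
  exists g, G g /\ ~ is_translation g /\ happ g z = z.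
Definition is_lin_subspace {n} (V : Cn n -> Prop) : Prop :=
  V vzero /\ (forall u v, V u -> V v -> V (vadd u v)) /\
  (forall l u, V u -> V (vscal l u)).
Definition is_affine_subspace {n} (A : Cn n -> Prop) : Prop :=
  (forall z, ~ A z) \/
  exists a (V : Cn n -> Prop), is_lin_subspace V /\
    forall z, A z <-> exists v, V v /\ z = vadd a v.
Definition EG {n} (G : Hel n -> Prop) (z : Cn n) : Prop :=
  forall A : Cn n -> Prop, is_affine_subspace A ->
    (forall w, Gamma G w -> A w) -> A z.

(** Topology of C^n (sup-norm balls, equivalent to the usual topology) *)
Definition close {n} (eps : R) (x y : Cn n) : Prop :=
  forall i, Cnorm (Csub (x i) (y i)) < eps.
Definition closure {n} (S : Cn n -> Prop) (x : Cn n) : Prop :=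
  forall eps, 0 < eps -> exists y, S y /\ close eps x y.
Definition is_closed {n} (S : Cn n -> Prop) : Prop :=
  forall x, closure S x -> S x.
Definition orbit {n} (G : Hel n -> Prop) (z : Cn n) (w : Cn n) : Prop :=
  exists g, G g /\ w = happ g z.
Definition G_invariant {n} (G : Hel n -> Prop) (S : Cn n -> Prop) : Prop :=
  forall g z, G g -> S z -> S (happ g z).
Definition minimal_set {n} (G : Hel n -> Prop) (M : Cn n -> Prop) : Prop :=
  (exists z, M z) /\ is_closed M /\ G_invariant G M /\
  forall F : Cn n -> Prop, (exists z, F z) -> is_closed F -> G_invariant G F ->
    (forall z, F z -> M z) -> forall z, M z -> F z.

Definition cont_on {n} (S : Cn n -> Prop) (f : Cn n -> Cn n) : Prop :=
  forall x, S x -> forall eps, 0 < eps -> exists delta, 0 < delta /\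
    forall y, S y -> close delta x y -> close eps (f x) (f y).
Definition homeomorphic {n} (S T : Cn n -> Prop) : Prop :=
  exists f g : Cn n -> Cn n,
    (forall x, S x -> T (f x)) /\ (forall y, T y -> S (g y)) /\
    (forall x, S x -> g (f x) = x) /\ (forall y, T y -> f (g y) = y) /\
    cont_on S f /\ cont_on T g.

(* Main.v *)
Require Import Defs.
From Coquelicot Require Import Complex.
From Stdlib Require Import ClassicalEpsilon FunctionalExtensionality Classical Lra Lia.

Definition DC_field_theory : @field_theory Defs.C (RtoC 0) (RtoC 1) Cplus Cmult Cminus Copp Cdiv Cinv (@eq Defs.C) := C_field_theory.
Add Field DC_field : DC_field_theory.

Ltac toC := repeat (change Defs.Cadd with Cplus || change Defs.Cmul with Cmult ||
  change Defs.Copp with Copp || change Defs.Csub with Cminus || change C0 with (RtoC 0) ||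
  change Defs.C1 with (RtoC 1));
  match goal with |- @eq _ ?a ?b => let T := type of a in change (@eq T a b) end.

Lemma Cinv_e z : Defs.Cinv z = Cinv z.
Proof. destruct z as [x y]. unfold Defs.Cinv, Cinv; simpl. f_equal; f_equal; ring. Qed.
Lemma Cnorm_e z : Cnorm z = Cmod z.
Proof. destruct z as [x y]. unfold Cnorm, Cmod; simpl. f_equal; ring. Qed.

Lemma close_iff n eps (x y : Cn n) : close eps x y <-> forall i, Cmod (x i - y i)%C < eps.
Proof. unfold close. split; intros H i; specialize (H i); rewrite Cnorm_e in *; exact H. Qed.

Lemma happ_i n (g : Hel n) z i : happ g z i = (fst g * z i + snd g i)%C.
Proof. reflexivity. Qed.

Lemma hel_eq n (g h : Hel n) : fst g = fst h -> (forall i, snd g i = snd h i) -> g = h.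
Proof. destruct g, h; simpl; intros -> H. f_equal. apply functional_extensionality; auto. Qed.

Lemma vec_eq n (u v : Cn n) : (forall i, u i = v i) -> u = v.
Proof. intros; apply functional_extensionality; auto. Qed.

Lemma fst_hcomp n (g h : Hel n) : fst (hcomp g h) = (fst g * fst h)%C.
Proof. reflexivity. Qed.
Lemma fst_hinv n (g : Hel n) : fst (hinv g) = (/ fst g)%C.
Proof. simpl. apply Cinv_e. Qed.
Lemma snd_hcomp n (g h : Hel n) i : snd (hcomp g h) i = (fst g * snd h i + snd g i)%C.
Proof. reflexivity. Qed.
Lemma snd_hinv n (g : Hel n) i : snd (hinv g) i = (- (/ fst g) * snd g i)%C.
Proof. simpl. unfold vscal. rewrite Cinv_e. reflexivity. Qed.

Lemma happ_comp n (g h : Hel n) z : happ (hcomp g h) z = happ g (happ h z).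
Proof. apply vec_eq; intro i. rewrite !happ_i, fst_hcomp, snd_hcomp. toC; ring. Qed.

Lemma happ_inv_l n (g : Hel n) z : fst g <> RtoC 0 -> happ (hinv g) (happ g z) = z.
Proof. intro H. apply vec_eq; intro i. rewrite !happ_i, fst_hinv, snd_hinv. toC; field. auto. Qed.
Lemma happ_inv_r n (g : Hel n) z : fst g <> RtoC 0 -> happ g (happ (hinv g) z) = z.
Proof. intro H. apply vec_eq; intro i. rewrite !happ_i, fst_hinv, snd_hinv. toC; field. auto. Qed.

Lemma vbound n (x : Cn n) : exists B, 0 < B /\ forall i, Cmod (x i) <= B.
Proof.
  induction n.
  - exists 1. split; [lra|]. intro i. apply (Fin.case0 (fun _ => _)). exact i.
  - destruct (IHn (fun q => x (Fin.FS q))) as [B [HB HBi]].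
    exists (B + Cmod (x Fin.F1)). pose proof (Cmod_ge_0 (x Fin.F1)). split; [lra|].
    intro i. pattern i. apply Fin.caseS'.
    + lra.
    + intro q. specialize (HBi q). simpl in HBi. lra.
Qed.

Section Grp.
Variable n : nat.
Variable G : Hel n -> Prop.
Hypothesis HG : is_subgroup G.
Lemma G_nz g : G g -> fst g <> RtoC 0. Proof. destruct HG as [H _]. apply H. Qed.
Lemma G_id : G hid. Proof. destruct HG as [_ [H _]]. exact H. Qed.
Lemma G_comp g h : G g -> G h -> G (hcomp g h). Proof. destruct HG as [_ [_ [H _]]]. apply H. Qed.
Lemma G_inv g : G g -> G (hinv g). Proof. destruct HG as [_ [_ [_ H]]]. apply H. Qed.
End Grp.

Definition ext0 {m} (u : Cn m) : Cn (S m) := fun i => Fin.caseS' i (fun _ => Defs.C) C0 u.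
Definition tl {m} (x : Cn (S m)) : Cn m := fun q => x (Fin.FS q).

Lemma small_zero (z : Complex.C) : (forall eps, 0 < eps -> Cmod z < eps) -> z = RtoC 0.
Proof.
  intro H. destruct (Req_dec (Cmod z) 0) as [E|E]. apply Cmod_eq_0; auto.
  pose proof (Cmod_ge_0 z). specialize (H (Cmod z)). lra.
Qed.

Lemma lin_comb n (V : Cn n -> Prop) u v mu : is_lin_subspace V -> V u -> V v ->
  V (fun i => u i + mu * v i)%C.
Proof. intros [_ [Ha Hs]] Hu Hv. exact (Ha _ _ Hu (Hs mu _ Hv)). Qed.

Lemma lin_closed n : forall V : Cn n -> Prop, is_lin_subspace V -> is_closed V.
Proof.
  induction n as [|m IH]; intros V HV x Hx.
  - replace x with (@vzero 0). apply HV. apply vec_eq. intro i. apply (Fin.case0 (fun _ => _)). exact i.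
  - set (V' := fun u : Cn m => V (ext0 u)).
    assert (HV' : is_lin_subspace V').
    { destruct HV as [H0 [Ha Hs]]. split; [|split].
      - unfold V'. replace (ext0 vzero) with (@vzero (S m)). exact H0.
        apply vec_eq. intro i. pattern i; apply Fin.caseS'; reflexivity.
      - intros u v Hu Hv. unfold V' in *. replace (ext0 (vadd u v)) with (vadd (ext0 u) (ext0 v)). auto.
        apply vec_eq. intro i. pattern i; apply Fin.caseS'; simpl; [|reflexivity].
        unfold vadd, ext0; simpl. toC; ring.
      - intros l u Hu. unfold V' in *. replace (ext0 (vscal l u)) with (vscal l (ext0 u)). auto.
        apply vec_eq. intro i. pattern i; apply Fin.caseS'; simpl; [|reflexivity].
        unfold vscal, ext0; simpl. toC; ring. }
    assert (P : exists e, V e /\ forall v, closure V v -> v Fin.F1 = (v Fin.F1 * e Fin.F1)%C).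
    { destruct (classic (exists e, V e /\ e Fin.F1 <> RtoC 0)) as [[e [He Hne]]|Hn].
      - exists (vscal (/ e Fin.F1)%C e). split. apply HV; auto.
        intros v _. unfold vscal. toC.
        field. auto.
      - exists vzero. split. apply HV. intros v Hv.
        assert (v Fin.F1 = RtoC 0).
        { apply small_zero. intros eps Heps. destruct (Hv eps Heps) as [y [Hy Hc]].
          rewrite close_iff in Hc. specialize (Hc Fin.F1).
          assert (y Fin.F1 = RtoC 0). { apply NNPP. intro. apply Hn. exists y. auto. }
          rewrite H in Hc. replace (v Fin.F1) with (v Fin.F1 - RtoC 0)%C. auto. toC; ring. }
        rewrite H. unfold vzero, C0. toC; ring. }
    destruct P as [e [He Pe]].
    set (y := fun i => (x i + (- x Fin.F1) * e i)%C).
    assert (Hy0 : y Fin.F1 = RtoC 0).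
    { unfold y. rewrite (Pe x Hx) at 1. toC; ring. }
    assert (Hyy : V y).
    { assert (Ey : ext0 (tl y) = y).
      { apply vec_eq. intro i. pattern i; apply Fin.caseS'; [|reflexivity]. simpl. rewrite Hy0. reflexivity. }
      rewrite <- Ey. apply (IH V' HV'). intros eps Heps.
      destruct (vbound _ e) as [B [HB HBi]].
      destruct (Hx (eps / (1 + B))) as [v [Hv Hc]]. apply Rdiv_lt_0_compat; lra.
      set (w := fun i => (v i + (- v Fin.F1) * e i)%C).
      assert (Hw : V w). apply lin_comb; auto.
      assert (Hw0 : w Fin.F1 = RtoC 0).
      { unfold w. rewrite (Pe v) at 1. toC; ring. intros d Hd. exists v. split; auto.
        rewrite close_iff. intro i. replace (v i - v i)%C with (RtoC 0) by (toC; ring). rewrite Cmod_0. auto. }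
      exists (tl w). split.
      { unfold V'. replace (ext0 (tl w)) with w. auto.
        apply vec_eq. intro i. pattern i; apply Fin.caseS'; [|reflexivity]. simpl. rewrite Hw0. reflexivity. }
      rewrite close_iff in *. intro q. unfold tl, y, w.
      replace (x (Fin.FS q) + - x Fin.F1 * e (Fin.FS q) - (v (Fin.FS q) + - v Fin.F1 * e (Fin.FS q)))%C
        with ((x (Fin.FS q) - v (Fin.FS q)) + (- (x Fin.F1 - v Fin.F1)) * e (Fin.FS q))%C by (toC; ring).
      eapply Rle_lt_trans. apply Cmod_triangle. rewrite Cmod_mult, Cmod_opp.
      pose proof (Hc (Fin.FS q)). pose proof (Hc Fin.F1). pose proof (HBi (Fin.FS q)).
      pose proof (Cmod_ge_0 (x Fin.F1 - v Fin.F1)%C).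
      assert (eps / (1 + B) * (1 + B) = eps) by (field; lra).
      assert (Cmod (x Fin.F1 - v Fin.F1) * Cmod (e (Fin.FS q)) <= eps / (1 + B) * B).
      { apply Rmult_le_compat; [apply Cmod_ge_0|apply Cmod_ge_0|lra|lra]. }
      assert (eps / (1 + B) + eps / (1 + B) * B = eps) by (field; lra).
      lra. }
    replace x with (fun i => (y i + (x Fin.F1) * e i)%C). apply lin_comb; auto.
    apply vec_eq. intro i. unfold y. toC; ring.
Qed.

Lemma affine_closed n (A : Cn n -> Prop) : is_affine_subspace A -> is_closed A.
Proof.
  intros [Hemp | [a [V [HV HA]]]] x Hx.
  - destruct (Hx 1 Rlt_0_1) as [y [Hy _]]. exfalso; eapply Hemp; eauto.
  - apply HA. exists (fun i => (x i - a i)%C). split.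
    + apply (lin_closed n V HV). intros eps Heps. destruct (Hx eps Heps) as [y [Hy Hc]].
      apply HA in Hy. destruct Hy as [v [Hv ->]]. exists v. split; auto.
      rewrite close_iff in *. intro i. specialize (Hc i).
      replace (x i - a i - v i)%C with (x i - vadd a v i)%C. auto. unfold vadd. toC; ring.
    + apply vec_eq. intro i. unfold vadd. toC; ring.
Qed.

Section EGfacts.
Variable n : nat.
Variable G : Hel n -> Prop.
Hypothesis HG : is_subgroup G.

Lemma Csub_nz (a b : Complex.C) : a <> b -> (a - b)%C <> RtoC 0.
Proof. intros H E. apply H. replace a with ((a - b) + b)%C by ring. rewrite E. ring. Qed.

Lemma center_fix (g : Hel n) : fst g <> RtoC 1 ->
  happ g (fun i => (snd g i / (RtoC 1 - fst g))%C) = (fun i => (snd g i / (RtoC 1 - fst g))%C).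
Proof.
  intro H. apply vec_eq; intro i. rewrite happ_i. toC. field.
  apply Csub_nz. auto.
Qed.

Lemma fix_eq (g : Hel n) c i : happ g c = c -> snd g i = ((RtoC 1 - fst g) * c i)%C.
Proof.
  intro E. apply (f_equal (fun f => f i)) in E. rewrite happ_i in E.
  transitivity ((fst g * c i + snd g i) - fst g * c i)%C. toC; ring. rewrite E. toC; ring.
Qed.

Lemma Gamma_EG z : Gamma G z -> EG G z.
Proof. intros Hz A _ HA. auto. Qed.

Lemma EG_closed : is_closed (EG G).
Proof.
  intros x Hx A HA HGA. apply (affine_closed _ A HA). intros eps Heps.
  destruct (Hx eps Heps) as [y [Hy Hc]]. exists y. split; [apply Hy; auto | auto].
Qed.

Lemma Gamma_nonempty : non_abelian G -> exists a, Gamma G a.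
Proof.
  intros [g [h [Gg [Gh Hne]]]].
  destruct (classic (fst g = RtoC 1)) as [Eg|Eg].
  - destruct (classic (fst h = RtoC 1)) as [Eh|Eh].
    + exfalso. apply Hne. apply hel_eq.
      * rewrite !fst_hcomp, Eg, Eh. reflexivity.
      * intro i. rewrite !snd_hcomp, Eg, Eh. toC. ring.
    + eexists. exists h. split; auto. split. exact Eh. apply center_fix; auto.
  - eexists. exists g. split; auto. split. exact Eg. apply center_fix; auto.
Qed.

Lemma Gamma_inv g c : G g -> Gamma G c -> Gamma G (happ g c).
Proof.
  intros Gg [k [Gk [Hk Hkc]]].
  exists (hcomp g (hcomp k (hinv g))). split. apply G_comp; auto. apply G_comp; auto. apply G_inv; auto.
  split.
  - intro E. apply Hk. unfold is_translation, ratio in *. rewrite <- E.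
    rewrite !fst_hcomp, fst_hinv. toC. field. apply (G_nz _ _ HG); auto.
  - rewrite !happ_comp, happ_inv_l, Hkc; auto. apply (G_nz _ _ HG); auto.
Qed.

Lemma EG_inv g x : G g -> EG G x -> EG G (happ g x).
Proof.
  intros Gg Hx A HA HGA. pose proof (G_nz _ _ HG _ Gg) as Hnz.
  apply (Hx (fun z => A (happ g z))).
  - destruct HA as [Hemp | [a0 [W [HW HAe]]]].
    + left. intros z H. apply (Hemp _ H).
    + right. exists (happ (hinv g) a0), W. split; auto. intro z. rewrite HAe. split.
      * intros [w [Hw E]]. exists (vscal (/ fst g)%C w). split. apply HW; auto.
        apply vec_eq; intro i. apply (f_equal (fun f => f i)) in E. rewrite happ_i in E.
        unfold vadd, vscal. rewrite happ_i, fst_hinv, snd_hinv.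
        replace (z i) with ((fst g * z i + snd g i - snd g i) / fst g)%C by (toC; field; auto).
        rewrite E. unfold vadd. toC. field. auto.
      * intros [v [Hv ->]]. exists (vscal (fst g) v). split. apply HW; auto.
        apply vec_eq; intro i. unfold vadd, vscal. rewrite !happ_i, fst_hinv, snd_hinv.
        unfold vadd. toC. field. auto.
  - intros c Hc. apply HGA. apply Gamma_inv; auto.
Qed.
End EGfacts.

Lemma div_lt X L e : 0 < L -> X < e * L -> X / L < e.
Proof. intros. apply (Rmult_lt_reg_r L); auto. replace (X / L * L) with X by (field; lra). exact H0. Qed.

Lemma Cmod_sym (a b : Complex.C) : Cmod (a - b) = Cmod (b - a).
Proof. rewrite <- Cmod_opp. f_equal. ring. Qed.

Section Parts.
Variable n : nat.
Variable G : Hel n -> Prop.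
Hypothesis HG : is_subgroup G.

Lemma dist_out w : ~ EG G w -> exists r, 0 < r /\ forall y, EG G y -> exists i, r <= Cmod (w i - y i)%C.
Proof.
  intro Hw. assert (~ closure (EG G) w) as Hc by (intro H; apply Hw; apply EG_closed; auto).
  apply not_all_ex_not in Hc. destruct Hc as [r Hr].
  apply imply_to_and in Hr. destruct Hr as [Hr Hne]. exists r. split; auto.
  intros y Hy. apply NNPP. intro Hn. apply Hne. exists y. split; auto.
  rewrite close_iff. intro i. apply Rnot_le_lt. intro. apply Hn. exists i. auto.
Qed.

Lemma closure_trans z y : closure (orbit G z) y -> forall x, closure (orbit G y) x -> closure (orbit G z) x.
Proof.
  intros Hy x Hx eps Heps.
  destruct (Hx (eps/2)) as [u [[h [Gh ->]] Hc1]]. lra.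
  set (L := Cmod (fst h)). assert (0 <= L) by apply Cmod_ge_0.
  destruct (Hy (eps / (2 * (L + 1)))) as [v [[g [Gg ->]] Hc2]]. apply Rdiv_lt_0_compat; lra.
  exists (happ (hcomp h g) z). split. exists (hcomp h g). split; auto. apply G_comp; auto.
  rewrite close_iff in *. intro i. rewrite happ_comp.
  replace (x i - happ h (happ g z) i)%C with ((x i - happ h y i) + fst h * (y i - happ g z i))%C
    by (rewrite !happ_i; toC; ring).
  eapply Rle_lt_trans. apply Cmod_triangle. rewrite Cmod_mult. fold L.
  specialize (Hc1 i). specialize (Hc2 i).
  assert (L * Cmod (y i - happ g z i) <= L * (eps / (2 * (L + 1)))).
  { apply Rmult_le_compat_l; lra. }
  assert (L * (eps / (2 * (L + 1))) < eps / 2).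
  { replace (L * (eps / (2 * (L + 1)))) with ((L*eps) / (2*(L+1))) by (field; lra).
    apply div_lt. lra. replace (eps / 2 * (2 * (L + 1))) with (eps * L + eps) by field. nra. }
  lra.
Qed.

Lemma key_i a z w : EG G a -> ~ EG G z -> ~ EG G w -> closure (orbit G z) w -> closure (orbit G w) z.
Proof.
  intros Ha Hz Hw Hzw.
  destruct (dist_out w Hw) as [r [Hr Hrw]].
  destruct (vbound _ (fun i => z i - a i)%C) as [B [HB HBi]].
  intros eps Heps.
  set (d := Rmin (r/2) (eps * r / (2 * B))).
  assert (Hd : 0 < d). { apply Rmin_glb_lt. lra. apply Rdiv_lt_0_compat; nra. }
  destruct (Hzw d Hd) as [y [[g [Gg ->]] Hc]].
  pose proof (G_nz _ _ HG _ Gg) as Hnz.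
  set (L := Cmod (fst g)).
  assert (HL : r / (2 * B) <= L).
  { destruct (Hrw (happ g a) (EG_inv _ _ HG _ _ Gg Ha)) as [i Hi].
    rewrite close_iff in Hc. specialize (Hc i). specialize (HBi i). simpl in HBi.
    replace (w i - happ g a i)%C with ((w i - happ g z i) + fst g * (z i - a i))%C in Hi
      by (rewrite !happ_i; toC; ring).
    pose proof (Cmod_triangle (w i - happ g z i) (fst g * (z i - a i))).
    rewrite Cmod_mult in H. fold L in H.
    assert (d <= r/2) by apply Rmin_l.
    assert (L * Cmod (z i - a i) <= L * B) by (apply Rmult_le_compat_l; [apply Cmod_ge_0|lra]).
    apply Rmult_le_reg_r with (2 * B). lra. replace (r / (2 * B) * (2 * B)) with r by (field; lra). lra. }
  assert (HL0 : 0 < L). { eapply Rlt_le_trans; [|exact HL]. apply Rdiv_lt_0_compat; lra. }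
  exists (happ (hinv g) w). split. exists (hinv g). split; auto. apply G_inv; auto.
  rewrite close_iff in *. intro j. specialize (Hc j).
  replace (z j - happ (hinv g) w j)%C with ((happ g z j - w j) / fst g)%C
    by (rewrite !happ_i, fst_hinv, snd_hinv; toC; field; auto).
  rewrite Cmod_div; auto. rewrite Cmod_sym. fold L. apply div_lt. auto.
  assert (d <= eps * r / (2 * B)) by apply Rmin_r.
  assert (eps * r / (2 * B) <= eps * L).
  { replace (eps * r / (2 * B)) with (eps * (r / (2 * B))) by (field; lra). apply Rmult_le_compat_l; lra. }
  lra.
Qed.

Lemma orbit_unique z g h : ~ EG G z -> G g -> G h -> happ g z = happ h z -> forall y, happ g y = happ h y.
Proof.
  intros Hz Gg Gh E y. pose proof (G_nz _ _ HG _ Gh) as Hnz.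
  destruct (classic (fst g = fst h)) as [Ef|Ef].
  - apply vec_eq; intro i. apply (f_equal (fun f => f i)) in E. rewrite !happ_i in *.
    rewrite Ef in *. assert (snd g i = snd h i).
    { transitivity ((fst h * z i + snd g i) - fst h * z i)%C. toC; ring. rewrite E. toC; ring. }
    rewrite H. reflexivity.
  - exfalso. apply Hz. apply Gamma_EG. exists (hcomp (hinv h) g). split.
    apply G_comp; auto. apply G_inv; auto. split.
    + intro E1. apply Ef. unfold is_translation, ratio in E1. rewrite fst_hcomp, fst_hinv in E1.
      transitivity (fst h * (/ fst h * fst g))%C. toC; field; auto. rewrite E1. toC; ring.
    + rewrite happ_comp, E. apply happ_inv_l; auto.
Qed.

Definition Fm (z y x : Cn n) : Cn n :=
  match excluded_middle_informative (exists g, G g /\ x = happ g z) with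
  | left H => happ (proj1_sig (constructive_indefinite_description _ H)) y
  | right _ => x
  end.

Lemma Fm_spec z y g : ~ EG G z -> G g -> Fm z y (happ g z) = happ g y.
Proof.
  intros Hz Gg. unfold Fm. destruct excluded_middle_informative as [H|H].
  - destruct constructive_indefinite_description as [h [Gh Eh]]. simpl.
    apply (orbit_unique z); auto.
  - exfalso. apply H. exists g. auto.
Qed.

Lemma Fm_cont z y : ~ EG G z -> cont_on (orbit G z) (Fm z y).
Proof.
  intros Hz x [g [Gg ->]] eps Heps.
  pose proof (G_nz _ _ HG _ Gg) as Hnz.
  destruct (dist_out z Hz) as [r [Hr Hrz]].
  destruct (vbound _ (fun i => y i - z i)%C) as [B [HB HBi]].
  set (L := Cmod (fst g)).
  assert (HL : 0 < L) by (apply Cmod_gt_0; auto).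
  set (eta := eps / (2 * (L * B))).
  assert (Heta : 0 < eta). { apply Rdiv_lt_0_compat; nra. }
  set (d := Rmin (eps/2) (L * eta * r)).
  assert (Hd : 0 < d). { apply Rmin_glb_lt. lra. apply Rmult_lt_0_compat; [apply Rmult_lt_0_compat|]; lra. }
  exists d. split; auto.
  intros x' [g' [Gg' ->]] Hc. rewrite !Fm_spec; auto.
  set (k := hcomp (hinv g) g').
  assert (Hk : Cmod (fst k - RtoC 1) < eta).
  { destruct (classic (fst k = RtoC 1)) as [E|E].
    - rewrite E. replace (RtoC 1 - RtoC 1)%C with (RtoC 0) by ring. rewrite Cmod_0. auto.
    - apply Rnot_le_lt. intro Hle.
      set (c := fun i => (snd k i / (RtoC 1 - fst k))%C).
      assert (Hc' : EG G c).
      { apply Gamma_EG. exists k. split. apply G_comp; auto. apply G_inv; auto. split. exact E.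
        apply center_fix; auto. }
      destruct (Hrz c Hc') as [i Hi].
      rewrite close_iff in Hc. specialize (Hc i).
      assert (Hne : (RtoC 1 - fst k)%C <> RtoC 0) by (apply Csub_nz; auto).
      replace (happ g z i - happ g' z i)%C with (- (fst g * (fst k - RtoC 1) * (z i - c i)))%C in Hc.
      2:{ unfold c, k in *. rewrite fst_hcomp, fst_hinv in *. rewrite !happ_i, snd_hcomp, fst_hinv, snd_hinv.
          toC. field. split; auto. intro E0. apply Hne. replace (RtoC 1 - / fst g * fst g')%C with ((fst g - fst g') / fst g)%C by (field; auto). rewrite E0. field; auto. }
      rewrite Cmod_opp, !Cmod_mult in Hc. fold L in Hc.
      assert (d <= L * eta * r) by apply Rmin_r.
      assert (L * eta <= L * Cmod (fst k - RtoC 1)) by (apply Rmult_le_compat_l; lra).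
      assert (L * eta * r <= L * Cmod (fst k - RtoC 1) * Cmod (z i - c i)).
      { apply Rmult_le_compat; try nra. }
      lra. }
  rewrite close_iff in *. intro j. specialize (Hc j).
  replace (happ g y j - happ g' y j)%C with
    ((happ g z j - happ g' z j) + (- (fst g * (fst k - RtoC 1))) * (y j - z j))%C.
  2:{ unfold k. rewrite fst_hcomp, fst_hinv, !happ_i. toC. field. auto. }
  eapply Rle_lt_trans. apply Cmod_triangle. rewrite Cmod_mult, Cmod_opp, Cmod_mult. fold L.
  specialize (HBi j). simpl in HBi.
  assert (d <= eps/2) by apply Rmin_l.
  assert (L * Cmod (fst k - RtoC 1) * Cmod (y j - z j) <= L * eta * B).
  { apply Rmult_le_compat. apply Rmult_le_pos; [lra|apply Cmod_ge_0]. apply Cmod_ge_0.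
    apply Rmult_le_compat_l; lra. lra. }
  assert (L * eta * B = eps / 2) by (unfold eta; field; lra).
  lra.
Qed.

Lemma part_iii z y : ~ EG G z -> ~ EG G y -> homeomorphic (orbit G z) (orbit G y).
Proof.
  intros Hz Hy. exists (Fm z y), (Fm y z). split; [|split; [|split; [|split; [|split]]]].
  - intros x [g [Gg ->]]. rewrite Fm_spec; auto. exists g; auto.
  - intros x [g [Gg ->]]. rewrite Fm_spec; auto. exists g; auto.
  - intros x [g [Gg ->]]. rewrite !Fm_spec; auto.
  - intros x [g [Gg ->]]. rewrite !Fm_spec; auto.
  - apply Fm_cont; auto.
  - apply Fm_cont; auto.
Qed.

Lemma part_i a : EG G a -> forall z, ~ EG G z ->
     forall w, closure (orbit G z) w -> ~ EG G w ->
       forall x, (closure (orbit G w) x /\ ~ EG G x) <->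
                 (closure (orbit G z) x /\ ~ EG G x).
Proof.
  intros Ha z Hz w Hzw Hw x. split; intros [H1 H2]; split; auto.
  - apply (closure_trans z w); auto.
  - apply (closure_trans w z); auto. apply (key_i a); auto.
Qed.
End Parts.

Lemma sqrt3_half b : b * b = 3/4 -> b = sqrt 3 / 2 \/ b = - (sqrt 3 / 2).
Proof.
  intro H. pose proof (sqrt_sqrt 3 ltac:(lra)).
  assert ((b - sqrt 3 / 2) * (b + sqrt 3 / 2) = 0) by nra.
  apply Rmult_integral in H1. destruct H1; [left|right]; lra.
Qed.

Lemma SR_of a b (k : Z) : a * a + b * b = 1 -> 2 * a = IZR k -> F2 (a, b) \/ F3 (a, b).
Proof.
  intros E1 E2.
  assert (-1 <= a <= 1) by nra.
  assert (-2 <= k <= 2)%Z.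
  { split; [apply le_IZR|apply le_IZR]; simpl; lra. }
  assert (k = -2 \/ k = -1 \/ k = 0 \/ k = 1 \/ k = 2)%Z as Hk by lia.
  pose proof (sqrt_sqrt 3 ltac:(lra)) as S3.
  unfold F2, F3, H2, H3, Cexpi.
  destruct Hk as [->|[->|[->|[->| ->]]]].
  -
    assert (a = -1) by (simpl in E2; lra). assert (b = 0) by nra. subst.
    left. exists PI. split. exists 1%Z. right. simpl; lra.
    rewrite cos_PI, sin_PI. reflexivity.
  -
    assert (a = -1/2) by (simpl in E2; lra). subst.
    assert (Hb : b * b = 3/4) by nra. right.
    destruct (sqrt3_half b Hb) as [->| ->].
    + exists (- (PI/3) + PI). split. exists 1%Z. right; left. simpl; lra.
      rewrite neg_cos, neg_sin, cos_neg, sin_neg, cos_PI3, sin_PI3. f_equal; field.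
    + exists (PI/3 + PI). split. exists 1%Z. left. simpl; lra.
      rewrite neg_cos, neg_sin, cos_PI3, sin_PI3. f_equal; field.
  -
    assert (a = 0) by (simpl in E2; lra). subst.
    assert (Hb : (b - 1) * (b + 1) = 0) by nra. apply Rmult_integral in Hb. left.
    destruct Hb.
    + assert (b = 1) by lra. subst. exists (PI/2). split. exists 0%Z. left. simpl; lra.
      rewrite cos_PI2, sin_PI2. reflexivity.
    + assert (b = -1) by lra. subst. exists (- (PI/2)). split. exists (-1)%Z. left. simpl; lra.
      rewrite cos_neg, sin_neg, cos_PI2, sin_PI2. reflexivity.
  -
    assert (a = 1/2) by (simpl in E2; lra). subst.
    assert (Hb : b * b = 3/4) by nra. right.
    destruct (sqrt3_half b Hb) as [->| ->].
    + exists (PI/3). split. exists 0%Z. left. simpl; lra.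
      rewrite cos_PI3, sin_PI3. f_equal; field.
    + exists (- (PI/3)). split. exists 0%Z. right; left. simpl; lra.
      rewrite cos_neg, sin_neg, cos_PI3, sin_PI3. f_equal; field.
  - assert (a = 1) by (simpl in E2; lra). assert (b = 0) by nra. subst.
    left. exists 0. split. exists 0%Z. right. simpl; lra.
    rewrite cos_0, sin_0. reflexivity.
Qed.

Section Dense.
Variable n : nat.
Variable G : Hel n -> Prop.
Hypothesis HG : is_subgroup G.

Definition Rs (mu : Complex.C) : Prop :=
  forall b : Cn n, G (Defs.C1, b) -> G (Defs.C1, vscal mu b).

Lemma Rs_one : Rs (RtoC 1).
Proof. intros b Hb. replace (vscal (RtoC 1) b) with b. auto. apply vec_eq; intro i. unfold vscal. toC; ring. Qed.

Lemma Rs_add mu nu : Rs mu -> Rs nu -> Rs (mu + nu)%C.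
Proof.
  intros Hm Hn b Hb. replace (Defs.C1, vscal (mu + nu)%C b) with (hcomp (Defs.C1, vscal mu b) (Defs.C1, vscal nu b)).
  apply G_comp; auto. apply hel_eq.
  - rewrite fst_hcomp. cbn [fst]. toC; ring.
  - intro i. rewrite snd_hcomp. cbn [fst snd]. unfold vscal. toC; ring.
Qed.

Lemma Rs_opp mu : Rs mu -> Rs (- mu)%C.
Proof.
  intros Hm b Hb. replace (Defs.C1, vscal (- mu)%C b) with (hinv (Defs.C1, vscal mu b)).
  apply G_inv; auto. apply hel_eq.
  - rewrite fst_hinv. cbn [fst]. toC; field.
  - intro i. rewrite snd_hinv. cbn [fst snd]. unfold vscal. toC; field.
Qed.

Lemma Rs_mul mu nu : Rs mu -> Rs nu -> Rs (mu * nu)%C.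
Proof.
  intros Hm Hn b Hb. replace (vscal (mu * nu)%C b) with (vscal mu (vscal nu b)). auto.
  apply vec_eq; intro i. unfold vscal. toC; ring.
Qed.

Lemma Rs_ratio g : G g -> Rs (fst g).
Proof.
  intros Gg b Hb. pose proof (G_nz _ _ HG _ Gg).
  replace (Defs.C1, vscal (fst g) b) with (hcomp g (hcomp (Defs.C1, b) (hinv g))).
  apply G_comp; auto. apply G_comp; auto. apply G_inv; auto. apply hel_eq.
  - rewrite !fst_hcomp, fst_hinv. cbn [fst]. toC; field; auto.
  - intro i. rewrite !snd_hcomp, snd_hinv. cbn [fst snd]. unfold vscal. toC; field; auto.
Qed.

Lemma Rs_nat m : Rs (RtoC (INR m)).
Proof.
  induction m.
  - replace (RtoC (INR 0)) with (RtoC 1 + - RtoC 1)%C. apply Rs_add. apply Rs_one. apply Rs_opp, Rs_one.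
    simpl. ring.
  - rewrite S_INR, RtoC_plus. apply Rs_add; auto. apply Rs_one.
Qed.

Lemma Rs_int k : Rs (RtoC (IZR k)).
Proof.
  destruct (Z_le_gt_dec 0 k).
  - rewrite <- (Z2Nat.id k); auto. rewrite <- INR_IZR_INZ. apply Rs_nat.
  - replace k with (- Z.of_nat (Z.to_nat (- k)))%Z by lia. rewrite opp_IZR, <- INR_IZR_INZ, RtoC_opp.
    apply Rs_opp, Rs_nat.
Qed.

Lemma Rs_pow mu k : Rs mu -> Rs (mu ^ k)%C.
Proof. intro H. induction k; simpl. apply Rs_one. apply Rs_mul; auto. Qed.

Lemma Cmod_RtoC_le1 x : 0 < x <= 1 -> Cmod (RtoC x) <= 1.
Proof. intro. rewrite Cmod_R, Rabs_pos_eq; lra. Qed.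

Lemma Rs_dense l0 : Rs l0 -> Im l0 <> 0 -> (exists g, G g /\ ~ in_SR g) ->
  forall nu eps, 0 < eps -> exists mu, Rs mu /\ Cmod (mu - nu) < eps.
Proof.
  intros H0 Him Hns.
  destruct (classic (forall d, 0 < d -> exists mu, Rs mu /\ mu <> RtoC 0 /\ Cmod mu < d)) as [Hsmall|Hbig].
  - intros nu eps Heps.
    set (L0 := Cmod l0). assert (0 <= L0) by apply Cmod_ge_0.
    destruct (Hsmall (eps / (1 + L0))) as [mu [Hmu [Hnz Hlt]]]. apply Rdiv_lt_0_compat; lra.
    destruct l0 as [a0 b0]. simpl in Him.
    remember (nu / mu)%C as q. destruct q as [q1 q2].
    set (t := q2 / b0). set (s := q1 - t * a0).
    assert (Hq : nu = ((RtoC s + RtoC t * (a0, b0)) * mu)%C).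
    { replace (RtoC s + RtoC t * (a0, b0))%C with (q1, q2).
      rewrite Heqq. field. auto.
      apply injective_projections; simpl; unfold s, t; field; auto. }
    pose proof (archimed s) as [As1 As2]. pose proof (archimed t) as [At1 At2].
    exists (RtoC (IZR (up s)) * mu + RtoC (IZR (up t)) * ((a0, b0) * mu))%C. split.
    + apply Rs_add; apply Rs_mul; auto using Rs_int. apply Rs_mul; auto.
    + replace (RtoC (IZR (up s)) * mu + RtoC (IZR (up t)) * ((a0, b0) * mu) - nu)%C
        with (RtoC (IZR (up s) - s) * mu + RtoC (IZR (up t) - t) * ((a0, b0) * mu))%C
        by (rewrite Hq, !RtoC_minus; ring).
      eapply Rle_lt_trans. apply Cmod_triangle. rewrite !Cmod_mult. fold L0.
      assert (Hs1 : 0 < IZR (up s) - s <= 1) by lra.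
      assert (Ht1 : 0 < IZR (up t) - t <= 1) by lra.
      pose proof (Cmod_RtoC_le1 _ Hs1). pose proof (Cmod_RtoC_le1 _ Ht1).
      pose proof (Cmod_ge_0 mu). pose proof (Cmod_ge_0 (RtoC (IZR (up s) - s))).
      pose proof (Cmod_ge_0 (RtoC (IZR (up t) - t))).
      assert (Cmod (RtoC (IZR (up s) - s)) * Cmod mu <= Cmod mu).
      { rewrite <- (Rmult_1_l (Cmod mu)) at 2. apply Rmult_le_compat_r; auto. }
      assert (Cmod (RtoC (IZR (up t) - t)) * (L0 * Cmod mu) <= L0 * Cmod mu).
      { rewrite <- (Rmult_1_l (L0 * Cmod mu)) at 2. apply Rmult_le_compat_r; auto. apply Rmult_le_pos; auto. }
      assert (Cmod mu * (1 + L0) < eps).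
      { apply Rmult_lt_reg_r with (/ (1 + L0)). apply Rinv_0_lt_compat; lra.
        replace (Cmod mu * (1 + L0) * / (1 + L0)) with (Cmod mu) by (field; lra). exact Hlt. }
      nra.
  - exfalso. apply not_all_ex_not in Hbig. destruct Hbig as [d Hd].
    apply imply_to_and in Hd. destruct Hd as [Hd Hd'].
    assert (B1 : forall mu, Rs mu -> mu <> RtoC 0 -> Cmod mu < 1 -> False).
    { intros mu Hmu Hnz Hlt.
      assert (Rabs (Cmod mu) < 1) by (rewrite Rabs_pos_eq; auto; apply Cmod_ge_0).
      destruct (pow_lt_1_zero _ H d Hd) as [N HN]. specialize (HN N (le_n _)).
      apply Hd'. exists (mu ^ N)%C. split. apply Rs_pow; auto. split. apply Cpow_nz; auto.
      rewrite Cmod_pow. rewrite Rabs_pos_eq in HN; auto. apply pow_le, Cmod_ge_0. }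
    destruct Hns as [g [Gg Hng]]. apply Hng.
    pose proof (G_nz _ _ HG _ Gg) as Hnz.
    assert (Rg : Rs (fst g)) by (apply Rs_ratio; auto).
    assert (Rg' : Rs (/ fst g)%C) by (rewrite <- fst_hinv; apply Rs_ratio; apply G_inv; auto).
    assert (Hinz : (/ fst g)%C <> RtoC 0).
    { intro E. apply C1_nz. rewrite <- (Cinv_r (fst g)); auto. rewrite E. ring. }
    assert (Hm1 : Cmod (fst g) = 1).
    { destruct (Rtotal_order (Cmod (fst g)) 1) as [Hl|[He|Hl]].
      - exfalso. exact (B1 _ Rg Hnz Hl).
      - exact He.
      - exfalso. apply (B1 _ Rg' Hinz). rewrite Cmod_inv; auto.
        apply (Rmult_lt_reg_l (Cmod (fst g))); [lra|]. rewrite Rinv_r; lra. }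
    unfold in_SR, ratio. destruct (fst g) as [a b] eqn:Eg.
    assert (Hab : a * a + b * b = 1).
    { pose proof (Cmod2_alt (a, b)). rewrite Hm1 in H. simpl in H. nra. }
    assert (Hinv : (/ (a, b))%C = (a, (- b)%R)).
    { assert (((a, b) * (a, (- b)%R))%C = RtoC 1) by (apply injective_projections; simpl; nra).
      transitivity (/ (a, b) * ((a, b) * (a, (- b)%R)))%C. rewrite H; ring. field. all: try exact Hnz. }
    assert (Rx : Rs (RtoC (2 * a))).
    { replace (RtoC (2 * a)) with ((a, b) + / (a, b))%C. apply Rs_add; auto.
      rewrite Hinv. apply injective_projections; simpl; ring. }
    set (x := 2 * a) in *.
    pose proof (archimed x) as [Ax1 Ax2].
    assert (Hf : IZR (up x) - x = 1).
    { destruct (Rle_lt_or_eq_dec _ _ Ax2) as [Hl|]; auto. exfalso.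
      apply (B1 (RtoC (IZR (up x) - x))).
      - rewrite RtoC_minus. replace (RtoC (IZR (up x)) - RtoC x)%C with (RtoC (IZR (up x)) + - RtoC x)%C by ring.
        apply Rs_add. apply Rs_int. apply Rs_opp; auto.
      - intro E. apply (f_equal fst) in E. simpl in E. lra.
      - rewrite Cmod_R, Rabs_pos_eq; lra. }
    apply (SR_of a b (up x - 1)); auto. rewrite minus_IZR. unfold x in *. simpl. lra.
Qed.
End Dense.

Fixpoint hpow {n} (h : Hel n) (k : nat) : Hel n :=
  match k with O => hid | S k => hcomp h (hpow h k) end.

Section Main.
Variable n : nat.
Variable G : Hel n -> Prop.
Hypothesis HG : is_subgroup G.
Hypothesis Hdense : forall nu eps, 0 < eps -> exists mu, Rs n G mu /\ Cmod (mu - nu) < eps.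

Definition W (v : Cn n) : Prop :=
  forall eps, 0 < eps -> exists b, G (Defs.C1, b) /\ close eps v b.

Lemma W_refl b : G (Defs.C1, b) -> W b.
Proof.
  intros Hb eps Heps. exists b. split; auto. rewrite close_iff. intro i.
  replace (b i - b i)%C with (RtoC 0) by (toC; ring). rewrite Cmod_0. auto.
Qed.

Lemma W_add u v : W u -> W v -> W (vadd u v).
Proof.
  intros Hu Hv eps Heps.
  destruct (Hu (eps/2)) as [b1 [G1 C1]]. lra. destruct (Hv (eps/2)) as [b2 [G2 C2]]. lra.
  exists (vadd b1 b2). split.
  - replace (Defs.C1, vadd b1 b2) with (hcomp (Defs.C1, b1) (Defs.C1, b2)). apply G_comp; auto.
    apply hel_eq. rewrite fst_hcomp. cbn [fst]. toC; ring.
    intro i. rewrite snd_hcomp. cbn [fst snd]. unfold vadd. toC; ring.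
  - rewrite close_iff in *. intro i. specialize (C1 i). specialize (C2 i).
    replace (vadd u v i - vadd b1 b2 i)%C with ((u i - b1 i) + (v i - b2 i))%C by (unfold vadd; toC; ring).
    eapply Rle_lt_trans. apply Cmod_triangle. lra.
Qed.

Lemma W_scal l u : W u -> W (vscal l u).
Proof.
  intros Hu eps Heps.
  set (L := Cmod l). assert (0 <= L) by apply Cmod_ge_0.
  destruct (Hu (eps / (2 * (L + 1)))) as [b [Gb Cb]]. apply Rdiv_lt_0_compat; lra.
  destruct (vbound _ b) as [B [HB HBi]].
  destruct (Hdense l (eps / (2 * B))) as [rho [Hrho Hr]]. apply Rdiv_lt_0_compat; lra.
  exists (vscal rho b). split. apply Hrho; auto.
  rewrite close_iff in *. intro i. specialize (Cb i). specialize (HBi i).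
  replace (vscal l u i - vscal rho b i)%C with (l * (u i - b i) + (l - rho) * b i)%C by (unfold vscal; toC; ring).
  eapply Rle_lt_trans. apply Cmod_triangle. rewrite !Cmod_mult. fold L. rewrite (Cmod_sym l rho).
  assert (L * Cmod (u i - b i) <= L * (eps / (2 * (L + 1)))) by (apply Rmult_le_compat_l; lra).
  assert (L * (eps / (2 * (L + 1))) < eps / 2).
  { replace (L * (eps / (2 * (L + 1)))) with ((L*eps) / (2*(L+1))) by (field; lra).
    apply div_lt. lra. replace (eps / 2 * (2 * (L + 1))) with (eps * L + eps) by field. nra. }
  assert (Cmod (rho - l) * Cmod (b i) <= eps / (2 * B) * B).
  { apply Rmult_le_compat; try apply Cmod_ge_0; lra. }
  assert (eps / (2 * B) * B = eps / 2) by (field; lra).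
  lra.
Qed.

Lemma W_lin : is_lin_subspace W.
Proof.
  split; [|split]. apply W_refl. change (G hid). apply G_id; auto. apply W_add. apply W_scal.
Qed.

Lemma comm_W h g c c' : G h -> G g -> fst h <> RtoC 1 -> fst g <> RtoC 1 ->
  happ h c = c -> happ g c' = c' -> W (fun i => (c' i - c i)%C).
Proof.
  intros Gh Gg Hh1 Hg1 Fh Fg.
  pose proof (G_nz _ _ HG _ Gh) as Hh0. pose proof (G_nz _ _ HG _ Gg) as Hg0.
  assert (N1 : (RtoC 1 - fst h)%C <> RtoC 0) by (apply Csub_nz; auto).
  assert (N2 : (fst g - RtoC 1)%C <> RtoC 0) by (apply Csub_nz; auto).
  set (m := fun i => ((RtoC 1 - fst h) * (fst g - RtoC 1) * (c' i - c i))%C).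
  assert (Hm : G (Defs.C1, m)).
  { replace (Defs.C1, m) with (hcomp h (hcomp g (hcomp (hinv h) (hinv g)))).
    apply G_comp; auto. apply G_comp; auto. apply G_comp; try apply G_inv; auto.
    apply hel_eq.
    - rewrite !fst_hcomp, !fst_hinv. cbn [fst]. toC; field; auto.
    - intro i. rewrite !snd_hcomp, !snd_hinv, !fst_hinv. cbn [snd].
      rewrite (fix_eq n h c i Fh), (fix_eq n g c' i Fg). unfold m. toC; field; auto. }
  replace (fun i => (c' i - c i)%C) with (vscal (/ ((RtoC 1 - fst h) * (fst g - RtoC 1)))%C m).
  apply W_scal. apply W_refl; auto.
  apply vec_eq; intro i. unfold vscal, m. toC; field; auto.
Qed.

Lemma G_hpow (h : Hel n) k : G h -> G (hpow h k).
Proof. intro Gh. induction k; simpl. apply G_id; auto. apply G_comp; auto. Qed.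

Lemma happ_hpow (h : Hel n) (c : Cn n) k (z : Cn n) i : happ h c = c ->
  happ (hpow h k) z i = (c i + (fst h ^ k) * (z i - c i))%C.
Proof.
  intro Fh. induction k.
  - simpl hpow. rewrite happ_i. cbn [fst snd hid]. unfold vzero. change (Cpow (fst h) 0) with (RtoC 1).
    toC; ring.
  - change (hpow h (S k)) with (hcomp h (hpow h k)). rewrite happ_comp, happ_i, IHk, (fix_eq n h c i Fh).
    change (Cpow (fst h) (S k)) with (fst h * Cpow (fst h) k)%C. toC; ring.
Qed.

Lemma dense_main h c : G h -> Cmod (fst h) < 1 -> happ h c = c ->
  forall z x, EG G x -> closure (orbit G z) x.
Proof.
  intros Gh Hlt Fh z x Hx.
  assert (Hh1 : fst h <> RtoC 1). { intro E. rewrite E, Cmod_1 in Hlt. lra. }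
  assert (HW : W (fun i => (x i - c i)%C)).
  { apply (Hx (fun u => W (fun i => (u i - c i)%C))).
    - right. exists c, W. split. apply W_lin. intro u. split.
      + intro Hu. exists (fun i => (u i - c i)%C). split; auto. apply vec_eq; intro i. unfold vadd. toC; ring.
      + intros [v [Hv ->]]. replace (fun i => (vadd c v i - c i)%C) with v; auto.
        apply vec_eq; intro i. unfold vadd. toC; ring.
    - intros c' [g' [Gg' [Hg' Fg]]]. apply (comm_W h g' c c'); auto. }
  intros eps Heps.
  destruct (vbound _ (fun i => (z i - c i)%C)) as [B [HB HBi]].
  assert (Rabs (Cmod (fst h)) < 1) by (rewrite Rabs_pos_eq; auto; apply Cmod_ge_0).
  destruct (pow_lt_1_zero _ H (eps / (2 * B))) as [N HN]. apply Rdiv_lt_0_compat; lra.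
  specialize (HN N (le_n _)). rewrite Rabs_pos_eq in HN by (apply pow_le, Cmod_ge_0).
  destruct (HW (eps / 2)) as [b [Gb Cb]]. lra.
  exists (happ (hcomp (Defs.C1, b) (hpow h N)) z). split.
  - eexists. split; [|reflexivity]. apply G_comp; auto. apply G_hpow; auto.
  - rewrite close_iff in *. intro i. specialize (Cb i). specialize (HBi i). simpl in Cb, HBi.
    rewrite happ_comp, happ_i, happ_hpow with (c := c); auto. cbn [fst snd].
    replace (x i - (Defs.C1 * (c i + fst h ^ N * (z i - c i)) + b i))%C
      with ((x i - c i - b i) + - (fst h ^ N * (z i - c i)))%C by (toC; ring).
    eapply Rle_lt_trans. apply Cmod_triangle. rewrite Cmod_opp, Cmod_mult, Cmod_pow.
    assert (Cmod (fst h) ^ N * Cmod (z i - c i) <= eps / (2 * B) * B).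
    { apply Rmult_le_compat; try lra. apply pow_le, Cmod_ge_0. apply Cmod_ge_0. }
    assert (eps / (2 * B) * B = eps / 2) by (field; lra).
    lra.
Qed.
End Main.

Lemma part_ii n (G : Hel n -> Prop) : is_subgroup G ->
  (exists l, Lambda G l /\ Cim l <> 0) ->
  (exists g, G g /\ ~ in_SR g) ->
  (exists g, G g /\ ~ in_R g) ->
  minimal_set G (EG G) /\ forall z x, EG G x -> closure (orbit G z) x.
Proof.
  intros HG [l [[g0 [Gg0 El]] Hl]] Hsr [g [Gg HR]].
  assert (Hdense : forall nu eps, 0 < eps -> exists mu, Rs n G mu /\ Cmod (mu - nu) < eps).
  { apply (Rs_dense n G HG l); auto. rewrite <- El. apply Rs_ratio; auto. }
  assert (Hh : exists h, G h /\ Cmod (fst h) < 1).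
  { unfold in_R, ratio in HR. rewrite Cnorm_e in HR. pose proof (G_nz _ _ HG _ Gg).
    destruct (Rtotal_order (Cmod (fst g)) 1) as [Hlt|[He|Hgt]].
    - exists g; auto.
    - contradiction.
    - exists (hinv g). split. apply G_inv; auto. rewrite fst_hinv, Cmod_inv; auto.
      apply (Rmult_lt_reg_l (Cmod (fst g))); [lra|]. rewrite Rinv_r; lra. }
  destruct Hh as [h [Gh Hlt]].
  assert (Hh1 : fst h <> RtoC 1). { intro E. rewrite E, Cmod_1 in Hlt. lra. }
  set (c := fun i => (snd h i / (RtoC 1 - fst h))%C).
  assert (Fh : happ h c = c) by (apply center_fix; auto).
  assert (Hd := dense_main n G HG Hdense h c Gh Hlt Fh).
  split; auto.
  split; [|split; [|split]].
  - exists c. apply Gamma_EG. exists h. split; auto.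
  - apply EG_closed; auto.
  - intros g' x Gg' Hx. apply EG_inv; auto.
  - intros F [z0 Fz0] Fcl Finv Fsub z Ez. apply Fcl. intros eps Heps.
    destruct (Hd z0 z Ez eps Heps) as [y [[g' [Gg' ->]] Hc]].
    exists (happ g' z0). split; auto.
Qed.

Theorem corollary1p2 (n : nat) (G : Hel n -> Prop) :
  is_subgroup G ->
  non_abelian G ->
  (exists l, Lambda G l /\ Cim l <> 0) ->
  (exists g, G g /\ ~ in_SR g) ->
  (exists z, ~ EG G z) ->
  (* (i) *)
  (forall z, ~ EG G z ->
     forall w, closure (orbit G z) w -> ~ EG G w ->
       forall x, (closure (orbit G w) x /\ ~ EG G x) <->
                 (closure (orbit G z) x /\ ~ EG G x)) /\
  (* (ii) *)
  ((exists g, G g /\ ~ in_R g) ->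
     minimal_set G (EG G) /\ forall z x, EG G x -> closure (orbit G z) x) /\
  (* (iii) *)
  (forall z y, ~ EG G z -> ~ EG G y -> homeomorphic (orbit G z) (orbit G y)).
Proof.
  intros HG Hna Hlam Hsr _.
  destruct (Gamma_nonempty n G Hna) as [a Ha].
  split; [|split].
  - apply (part_i n G HG a). apply Gamma_EG; auto.
  - intro HR. apply part_ii; auto.
  - intros z y Hz Hy. apply part_iii; auto.
Qed.
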